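(* Assume $\mathcal R_0>1$, let $k$ satisfy $$\frac{\beta_E\nu\nu_E-(\nu_E+\delta_E)\delta_F}{\beta_E\nu\nu_E-(1-\gamma_s)(\nu_E+\delta_E)\delta_F}\,\delta_s<k<\delta_s,$$ and let $\kappa>0$ satisfy $$\frac{\delta_s-k}{k}\le\kappa\le\frac{\gamma_s\delta_F(\nu_E+\delta_E)}{\beta_E\nu\nu_E-\delta_F(\nu_E+\delta_E)}.$$ Then $\mathcal M(\kappa):=\mathcal T_1\cap\mathcal T_2(\kappa)\cap\mathcal T_3$ is positively invariant (for all Filippov solutions) for the closed-loop system $$\dot E=\beta_E F\Big(1-\frac EK\Big)-(\nu_E+\delta_E)E,\quad \dot M=(1-\nu)\nu_E E-\delta_M M,\quad \dot F=\nu\nu_E E\frac{M}{M+\gamma_sM_s}-\delta_F F,\quad \dot M_s=k(M+M_s)-\delta_sM_s.$$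
   Context: Parameters: $\beta_E,\nu_E,\delta_E,\delta_M,\delta_F,\delta_s,K>0$, $\nu\in(0,1)$, $\gamma_s\in(0,1]$, $\delta_s\ge\delta_M$. $\mathcal R_0:=\dfrac{\beta_E\nu\nu_E}{\delta_F(\nu_E+\delta_E)}$. $\mathcal D'=[0,+\infty)^4$ with points $z=(E,M,F,M_s)^T$. Sets: $\mathcal T_1=\{z\in\mathcal D':\beta_EF(1-E/K)\le(\nu_E+\delta_E)E\}$, $\mathcal T_2(\kappa)=\{z\in\mathcal D':M\le\kappa M_s\}$, $\mathcal T_3=\{z\in\mathcal D':(1-\nu)\nu_EE\le\delta_MM\}$. Solutions are Filippov solutions: locally Lipschitz $z:I\to\mathcal D'$ with $\dot z(t)\in\bigcap_{\varepsilon>0}\bigcap_{N}\overline{\mathrm{conv}}\,X\big(((z(t)+\varepsilon B)\cap\mathcal D')\setminus N\big)$ for a.e. $t$, where $X$ is the closed-loop right-hand side, $B$ the unit ball of $\mathbb R^4$, $N$ ranging over Lebesgue-null sets. Positive invariance: every Filippov solution with $z(0)\in\mathcal M(\kappa)$ stays in $\mathcal M(\kappa)$ for all $t\ge0$. *)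

(* Defs.v *)
From Stdlib Require Import Reals.
Open Scope R_scope.

Record pt : Type := mkpt { pE : R; pM : R; pF : R; pMs : R }.

Definition padd (x y : pt) : pt :=
  mkpt (pE x + pE y) (pM x + pM y) (pF x + pF y) (pMs x + pMs y).
Definition pscale (a : R) (x : pt) : pt :=
  mkpt (a * pE x) (a * pM x) (a * pF x) (a * pMs x).
Definition pzero : pt := mkpt 0 0 0 0.
Definition pdist (x y : pt) : R :=
  sqrt ((pE x - pE y)^2 + (pM x - pM y)^2 + (pF x - pF y)^2 + (pMs x - pMs y)^2).

Fixpoint rsum (n : nat) (f : nat -> R) : R :=
  match n with O => 0 | S m => rsum m f + f m end.
Fixpoint psum (n : nat) (f : nat -> pt) : pt :=
  match n with O => pzero | S m => padd (psum m f) (f m) end.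

(* Lebesgue-null subsets of R and of R^4: coverable by countably many
   boxes of arbitrarily small total volume. *)
Definition null1 (N : R -> Prop) : Prop :=
  forall eps, 0 < eps ->
  exists a b : nat -> R,
    (forall n, a n <= b n) /\
    (forall t, N t -> exists n, a n <= t <= b n) /\
    (forall m, rsum m (fun n => b n - a n) <= eps).

Definition in_box (a b x : pt) : Prop :=
  pE a <= pE x <= pE b /\ pM a <= pM x <= pM b /\
  pF a <= pF x <= pF b /\ pMs a <= pMs x <= pMs b.
Definition box_vol (a b : pt) : R :=
  (pE b - pE a) * (pM b - pM a) * (pF b - pF a) * (pMs b - pMs a).

Definition null4 (N : pt -> Prop) : Prop :=
  forall eps, 0 < eps ->
  exists a b : nat -> pt,
    (forall n, pE (a n) <= pE (b n) /\ pM (a n) <= pM (b n) /\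
               pF (a n) <= pF (b n) /\ pMs (a n) <= pMs (b n)) /\
    (forall x, N x -> exists n, in_box (a n) (b n) x) /\
    (forall m, rsum m (fun n => box_vol (a n) (b n)) <= eps).

Definition in_closed_conv (A : pt -> Prop) (v : pt) : Prop :=
  forall delta, 0 < delta ->
  exists (n : nat) (w : nat -> R) (p : nat -> pt),
    (forall i, (i < n)%nat -> 0 <= w i /\ A (p i)) /\
    rsum n w = 1 /\
    pdist v (psum n (fun i => pscale (w i) (p i))) < delta.

Definition Dp (z : pt) : Prop :=
  0 <= pE z /\ 0 <= pM z /\ 0 <= pF z /\ 0 <= pMs z.

Definition repro_number (betaE nu nuE deltaE deltaF : R) : R :=
  betaE * nu * nuE / (deltaF * (nuE + deltaE)).

(* At M + gamma_s M_s = 0 the fraction is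
   undefined; Stdlib's division gives / 0 = 0 there, which is irrelevant for
   Filippov solutions since that set is Lebesgue-null in R^4. *)
Definition X (betaE nuE deltaE deltaM deltaF deltas K nu gammas k : R)
    (z : pt) : pt :=
  let E := pE z in let M := pM z in let F := pF z in let Ms := pMs z in
  mkpt (betaE * F * (1 - E / K) - (nuE + deltaE) * E)
       ((1 - nu) * nuE * E - deltaM * M)
       (nu * nuE * E * (M / (M + gammas * Ms)) - deltaF * F)
       (k * (M + Ms) - deltas * Ms).

Definition filippov_set (Xf : pt -> pt) (z : pt) (v : pt) : Prop :=
  forall eps, 0 < eps -> forall N : pt -> Prop, null4 N ->
  in_closed_conv
    (fun y => exists x, Dp x /\ pdist x z <= eps /\ ~ N x /\ y = Xf x) v.

Definition is_interval (I : R -> Prop) : Prop :=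
  forall a b c, I a -> I c -> a <= b <= c -> I b.

Definition loc_lipschitz_on (I : R -> Prop) (z : R -> pt) : Prop :=
  forall t, I t -> exists delta L, 0 < delta /\
    forall s u, I s -> I u -> Rabs (s - t) < delta -> Rabs (u - t) < delta ->
      pdist (z s) (z u) <= L * Rabs (s - u).

Definition filippov_solution (Xf : pt -> pt) (I : R -> Prop) (z : R -> pt)
    : Prop :=
  (forall t, I t -> Dp (z t)) /\
  loc_lipschitz_on I z /\
  exists N : R -> Prop, null1 N /\
    forall t, I t -> ~ N t ->
      exists v : pt,
        derivable_pt_lim (fun s => pE (z s)) t (pE v) /\
        derivable_pt_lim (fun s => pM (z s)) t (pM v) /\
        derivable_pt_lim (fun s => pF (z s)) t (pF v) /\
        derivable_pt_lim (fun s => pMs (z s)) t (pMs v) /\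
        filippov_set Xf (z t) v.

Definition positively_invariant (Xf : pt -> pt) (S : pt -> Prop) : Prop :=
  forall (I : R -> Prop) (z : R -> pt),
    is_interval I -> I 0 -> filippov_solution Xf I z -> S (z 0) ->
    forall t, I t -> 0 <= t -> S (z t).

Definition T1 (betaE nuE deltaE K : R) (z : pt) : Prop :=
  Dp z /\ betaE * pF z * (1 - pE z / K) <= (nuE + deltaE) * pE z.
Definition T2 (kappa : R) (z : pt) : Prop :=
  Dp z /\ pM z <= kappa * pMs z.
Definition T3 (nu nuE deltaM : R) (z : pt) : Prop :=
  Dp z /\ (1 - nu) * nuE * pE z <= deltaM * pM z.

Definition Mset (betaE nuE deltaE deltaM K nu kappa : R) (z : pt) : Prop :=
  T1 betaE nuE deltaE K z /\ T2 kappa z /\ T3 nu nuE deltaM z.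

(* Main.v *)
Require Import Defs.
From Stdlib Require Import Reals Lra Lia Psatz FunctionalExtensionality.
Open Scope R_scope.

Lemma rsum_le (n : nat) (f g : nat -> R) :
  (forall i, (i < n)%nat -> f i <= g i) -> rsum n f <= rsum n g.
Proof.
  induction n as [|n IH]; simpl; intros H; [lra|].
  assert (H1 := H n ltac:(lia)). assert (rsum n f <= rsum n g) by (apply IH; intros; apply H; lia). lra.
Qed.

Lemma rsum_ge0 (n : nat) (f : nat -> R) :
  (forall i, (i < n)%nat -> 0 <= f i) -> 0 <= rsum n f.
Proof.
  induction n as [|n IH]; simpl; intros H; [lra|].
  assert (H1 := H n ltac:(lia)). assert (0 <= rsum n f) by (apply IH; intros; apply H; lia). lra.
Qed.

Lemma rsum_plus (n : nat) (f g : nat -> R) :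
  rsum n (fun i => f i + g i) = rsum n f + rsum n g.
Proof. induction n; simpl; [lra|]. rewrite IHn. lra. Qed.

Lemma rsum_scal (n : nat) (c : R) (f : nat -> R) :
  rsum n (fun i => c * f i) = c * rsum n f.
Proof. induction n; simpl; [lra|]. rewrite IHn. lra. Qed.

Lemma rsum_half (n : nat) : rsum n (fun i => (/2) ^ (S i)) = 1 - (/2) ^ n.
Proof. induction n; cbn [rsum]; [simpl; lra|]. rewrite IHn. simpl. lra. Qed.

Lemma rsum_mono_n (n m : nat) (f : nat -> R) :
  (forall i, 0 <= f i) -> (n <= m)%nat -> rsum n f <= rsum m f.
Proof.
  intros H Hnm. induction Hnm; simpl; [lra|]. specialize (H m). lra.
Qed.

Lemma real_ind (a b : R) (Q : R -> Prop) :
  a <= b -> Q a ->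
  (forall s, a < s <= b -> (forall u, a <= u < s -> Q u) -> Q s) ->
  (forall s, a <= s < b -> (forall u, a <= u <= s -> Q u) ->
     exists h, 0 < h /\ forall u, s < u < s + h -> u <= b -> Q u) ->
  forall u, a <= u <= b -> Q u.
Proof.
  intros Hab Qa Hcl Hst.
  set (S := fun t => a <= t <= b /\ forall u, a <= u <= t -> Q u).
  assert (HbS : bound S) by (exists b; intros t [Ht _]; lra).
  assert (HeS : exists t, S t) by (exists a; split; [lra| intros u Hu; replace u with a by lra; exact Qa]).
  destruct (completeness S HbS HeS) as [s [Hub Hlub]].
  assert (Has : a <= s) by (apply Hub; split; [lra| intros u Hu; replace u with a by lra; exact Qa]).
  assert (Hsb : s <= b) by (apply Hlub; intros t [Ht _]; lra).
  assert (Hbelow : forall u, a <= u < s -> Q u).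
  { intros u Hu.
    destruct (Classical_Prop.classic (exists t, S t /\ u <= t)) as [[t [[_ Ht] Hut]]|Hno].
    - apply Ht; lra.
    - exfalso. assert (s <= u); [|lra]. apply Hlub. intros t Ht.
      destruct (Rle_or_lt t u) as [H|H]; [exact H|]. exfalso. apply Hno. exists t. split; [exact Ht|lra]. }
  assert (Qs : Q s).
  { destruct (Req_dec s a) as [E|E]; [subst; exact Qa|]. apply Hcl; [lra|exact Hbelow]. }
  assert (Hall : forall u, a <= u <= s -> Q u).
  { intros u Hu. destruct (Req_dec u s) as [E|E]; [subst; exact Qs|]. apply Hbelow; lra. }
  destruct (Rle_or_lt b s) as [Hbs|Hbs].
  - intros u Hu. apply Hall. lra.
  - exfalso. destruct (Hst s ltac:(lra) Hall) as [h [Hh Hq]].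
    set (t := Rmin (s + h/2) b).
    assert (Ht1 : s < t) by (unfold t; apply Rmin_glb_lt; lra).
    assert (Ht2 : t <= b) by (unfold t; apply Rmin_r).
    assert (Ht3 : t <= s + h/2) by (unfold t; apply Rmin_l).
    assert (S t).
    { split; [lra|]. intros u Hu. destruct (Rle_or_lt u s) as [H|H].
      - apply Hall; lra.
      - apply Hq; lra. }
    assert (t <= s) by (apply Hub; assumption). lra.
Qed.

Ltac mm := unfold Rmin, Rmax in *; repeat (destruct Rle_dec); try lra.

Definition lenI (a c e t : R) := Rmax 0 (Rmin t e - Rmax a c).

Lemma lenI_ge0 a c e t : 0 <= lenI a c e t.
Proof. unfold lenI. mm. Qed.
Lemma lenI_mono a c e t t' : t <= t' -> lenI a c e t <= lenI a c e t'.
Proof. unfold lenI. intros. mm. Qed.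
Lemma lenI_le a c e t : c <= e -> lenI a c e t <= e - c.
Proof. unfold lenI. intros. mm. Qed.
Lemma lenI_gain a c e t t' : a <= t -> c <= t -> t <= t' <= e ->
  lenI a c e t' - lenI a c e t = t' - t.
Proof. unfold lenI. intros. mm. Qed.

Lemma rsum_single (m n : nat) (f : nat -> R) :
  (forall i, 0 <= f i) -> (n < m)%nat -> f n <= rsum m f.
Proof.
  intros H Hnm. induction m as [|m IH]; [lia|]. simpl.
  destruct (Nat.eq_dec n m) as [->|Hne].
  - assert (0 <= rsum m f) by (apply rsum_ge0; intros; apply H). lra.
  - assert (f n <= rsum m f) by (apply IH; lia). specialize (H m). lra.
Qed.

Lemma rsum_minus (n : nat) (f g : nat -> R) :
  rsum n (fun i => f i - g i) = rsum n f - rsum n g.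
Proof. induction n; simpl; [lra|]. rewrite IHn. lra. Qed.

Lemma core (f : R -> R) (a b L : R) (N : R -> Prop) :
  a <= b -> 0 <= L ->
  (forall x y, a <= x <= b -> a <= y <= b -> Rabs (f x - f y) <= L * Rabs (x - y)) ->
  null1 N ->
  (forall t, a <= t < b -> ~ N t -> forall eps, 0 < eps ->
     exists delta, 0 < delta /\ forall h, 0 < h < delta -> f (t + h) - f t <= eps * h) ->
  f b <= f a.
Proof.
  intros Hab HL Hlip HN Hder.
  assert (Key : forall eps, 0 < eps -> f b <= f a + eps * (b - a + 2 * L + 1)).
  { intros eps Heps.
    destruct (HN eps Heps) as [c [d [Hcd [Hcov Hsum]]]].
    set (e := fun n => d n + eps * (/2) ^ (S n)).
    assert (Hce : forall n, c n <= e n).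
    { intros n. unfold e. specialize (Hcd n).
      assert (0 < (/2) ^ (S n)) by (apply pow_lt; lra). nra. }
    set (G := fun m t => rsum m (fun n => lenI a (c n) (e n) t)).
    assert (HGmono : forall m t t', t <= t' -> G m t <= G m t').
    { intros m t t' H. unfold G. apply rsum_le. intros. apply lenI_mono; lra. }
    assert (HGmono_m : forall m m' t, (m <= m')%nat -> G m t <= G m' t).
    { intros. unfold G. apply rsum_mono_n; [intros; apply lenI_ge0|lia]. }
    assert (HGb : forall m t, G m t <= 2 * eps).
    { intros m t. unfold G.
      apply Rle_trans with (rsum m (fun n => (d n - c n) + eps * (/2) ^ (S n))).
      - apply rsum_le. intros i _. eapply Rle_trans; [apply lenI_le, Hce|]. unfold e; lra.
      - rewrite rsum_plus, rsum_scal, rsum_half. specialize (Hsum m).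
        assert (0 < (/2) ^ m) by (apply pow_lt; lra). nra. }
    set (P := fun t => forall eta, 0 < eta -> exists m,
                f t <= f a + eps * (t - a) + L * G m t + eta).
    assert (HPb : P b).
    { apply (real_ind a b P Hab) ; [ | | | lra].
      - intros eta Heta. exists 0%nat. unfold G; simpl. lra.
      - intros s Hs Hbel eta Heta.
        set (r := eta / (2 * (L + 1))).
        assert (Hr : 0 < r) by (unfold r; apply Rdiv_lt_0_compat; lra).
        set (w := Rmax a (s - r)).
        assert (Hw1 : a <= w < s) by (unfold w; mm).
        assert (Hw2 : s - w <= r) by (unfold w; mm).
        destruct (Hbel w Hw1 (eta/2) ltac:(lra)) as [m Hm].
        exists m.
        assert (H1 := Hlip s w ltac:(lra) ltac:(lra)).
        rewrite (Rabs_right (s - w)) in H1 by lra.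
        assert (H2 : L * (s - w) <= eta / 2).
        { apply Rle_trans with (L * r); [apply Rmult_le_compat_l; lra|].
          apply Rle_trans with ((L+1) * r); [unfold r in *; nra|]. unfold r.
          right. field. lra. }
        assert (H3 := HGmono m w s ltac:(lra)).
        assert (H4 : L * G m w <= L * G m s) by (apply Rmult_le_compat_l; lra).
        assert (f s - f w <= L * (s - w)) by (apply Rle_trans with (Rabs (f s - f w)); [apply Rle_abs|lra]).
        nra.
      - intros s Hs Hall.
        assert (Ps : P s) by (apply Hall; lra).
        destruct (Classical_Prop.classic (N s)) as [HNs|HNs].
        + destruct (Hcov s HNs) as [n Hn].
          assert (Hen : d n < e n).
          { unfold e. assert (0 < (/2) ^ (S n)) by (apply pow_lt; lra). nra. }
          exists (e n - s). split; [lra|].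
          intros u Hu Hub eta Heta. destruct (Ps eta Heta) as [m Hm].
          exists (Nat.max m (S n)).
          assert (Hg : lenI a (c n) (e n) u - lenI a (c n) (e n) s = u - s)
            by (apply lenI_gain; lra).
          assert (Hgain : G (Nat.max m (S n)) u - G (Nat.max m (S n)) s >= u - s).
          { unfold G. rewrite <- rsum_minus.
            rewrite <- Hg. apply Rle_ge.
            apply (rsum_single _ n (fun i => lenI a (c i) (e i) u - lenI a (c i) (e i) s)).
            - intros i. assert (H := lenI_mono a (c i) (e i) s u ltac:(lra)). lra.
            - lia. }
          assert (HGm := HGmono_m m (Nat.max m (S n)) s ltac:(lia)).
          assert (H1 := Hlip u s ltac:(lra) ltac:(lra)).
          rewrite (Rabs_right (u - s)) in H1 by lra.
          assert (f u - f s <= L * (u - s)) by (apply Rle_trans with (Rabs (f u - f s)); [apply Rle_abs|lra]).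
          assert (L * G m s <= L * G (Nat.max m (S n)) s) by (apply Rmult_le_compat_l; lra).
          assert (L * (u - s) <= L * (G (Nat.max m (S n)) u - G (Nat.max m (S n)) s)) by (apply Rmult_le_compat_l; lra).
          nra.
        + destruct (Hder s Hs HNs eps Heps) as [del [Hdel Hd]].
          exists del. split; [lra|].
          intros u Hu Hub eta Heta. destruct (Ps eta Heta) as [m Hm]. exists m.
          assert (Hfu := Hd (u - s) ltac:(lra)). replace (s + (u - s)) with u in Hfu by ring.
          assert (H3 := HGmono m s u ltac:(lra)).
          assert (L * G m s <= L * G m u) by (apply Rmult_le_compat_l; lra).
          nra. }
    destruct (HPb eps Heps) as [m Hm].
    assert (L * G m b <= L * (2 * eps)) by (apply Rmult_le_compat_l; [lra| apply HGb]).
    nra. }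
  destruct (Rle_or_lt (f b) (f a)) as [H|H]; [exact H|].
  set (eps := (f b - f a) / (2 * (b - a + 2 * L + 1))).
  assert (Heps : 0 < eps) by (unfold eps; apply Rdiv_lt_0_compat; lra).
  specialize (Key eps Heps).
  assert (eps * (b - a + 2 * L + 1) = (f b - f a) / 2) by (unfold eps; field; lra).
  lra.
Qed.

Lemma abs_le_e a b : Rabs a <= b -> - b <= a <= b.
Proof. unfold Rabs; destruct Rcase_abs; intros; lra. Qed.
Lemma abs_le_i a b : - b <= a <= b -> Rabs a <= b.
Proof. unfold Rabs; destruct Rcase_abs; intros; lra. Qed.

Lemma sq_le_dist (u s : R) : 0 <= s -> u ^ 2 <= s -> Rabs u <= sqrt s.
Proof.
  intros Hs H. rewrite <- sqrt_Rsqr_abs. apply sqrt_le_1_alt. unfold Rsqr. simpl in H. lra.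
Qed.

Lemma distE x y : Rabs (pE x - pE y) <= pdist x y.
Proof. unfold pdist. pose proof (pow2_ge_0 (pE x - pE y)); pose proof (pow2_ge_0 (pM x - pM y)); pose proof (pow2_ge_0 (pF x - pF y)); pose proof (pow2_ge_0 (pMs x - pMs y)). apply sq_le_dist; lra. Qed.
Lemma distM x y : Rabs (pM x - pM y) <= pdist x y.
Proof. unfold pdist. pose proof (pow2_ge_0 (pE x - pE y)); pose proof (pow2_ge_0 (pM x - pM y)); pose proof (pow2_ge_0 (pF x - pF y)); pose proof (pow2_ge_0 (pMs x - pMs y)). apply sq_le_dist; lra. Qed.
Lemma distF x y : Rabs (pF x - pF y) <= pdist x y.
Proof. unfold pdist. pose proof (pow2_ge_0 (pE x - pE y)); pose proof (pow2_ge_0 (pM x - pM y)); pose proof (pow2_ge_0 (pF x - pF y)); pose proof (pow2_ge_0 (pMs x - pMs y)). apply sq_le_dist; lra. Qed.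
Lemma distMs x y : Rabs (pMs x - pMs y) <= pdist x y.
Proof. unfold pdist. pose proof (pow2_ge_0 (pE x - pE y)); pose proof (pow2_ge_0 (pM x - pM y)); pose proof (pow2_ge_0 (pF x - pF y)); pose proof (pow2_ge_0 (pMs x - pMs y)). apply sq_le_dist; lra. Qed.

Definition pcont (g : pt -> R) (z : pt) : Prop :=
  forall eta, 0 < eta -> exists e, 0 < e /\ forall x, pdist x z <= e -> Rabs (g x - g z) <= eta.

Lemma pcont_const c z : pcont (fun _ => c) z.
Proof. intros eta H. exists 1. split; [lra|]. intros. rewrite Rminus_diag, Rabs_R0. lra. Qed.
Lemma pcont_E z : pcont pE z.
Proof. intros eta H. exists eta. split; [lra|]. intros x Hx. eapply Rle_trans; [apply distE|exact Hx]. Qed.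
Lemma pcont_M z : pcont pM z.
Proof. intros eta H. exists eta. split; [lra|]. intros x Hx. eapply Rle_trans; [apply distM|exact Hx]. Qed.
Lemma pcont_F z : pcont pF z.
Proof. intros eta H. exists eta. split; [lra|]. intros x Hx. eapply Rle_trans; [apply distF|exact Hx]. Qed.
Lemma pcont_Ms z : pcont pMs z.
Proof. intros eta H. exists eta. split; [lra|]. intros x Hx. eapply Rle_trans; [apply distMs|exact Hx]. Qed.

Lemma pcont_plus f g z : pcont f z -> pcont g z -> pcont (fun x => f x + g x) z.
Proof.
  intros Hf Hg eta H. destruct (Hf (eta/2) ltac:(lra)) as [e1 [He1 H1]].
  destruct (Hg (eta/2) ltac:(lra)) as [e2 [He2 H2]].
  exists (Rmin e1 e2). split; [apply Rmin_glb_lt; lra|]. intros x Hx.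
  assert (A := H1 x (Rle_trans _ _ _ Hx (Rmin_l _ _))).
  assert (B := H2 x (Rle_trans _ _ _ Hx (Rmin_r _ _))).
  replace (f x + g x - (f z + g z)) with ((f x - f z) + (g x - g z)) by ring.
  eapply Rle_trans; [apply Rabs_triang|lra].
Qed.

Lemma pcont_scal c f z : pcont f z -> pcont (fun x => c * f x) z.
Proof.
  intros Hf eta H. destruct (Hf (eta / (Rabs c + 1))) as [e [He H1]].
  { apply Rdiv_lt_0_compat; [lra|]. assert (0 <= Rabs c) by apply Rabs_pos. lra. }
  exists e. split; [lra|]. intros x Hx. specialize (H1 x Hx).
  replace (c * f x - c * f z) with (c * (f x - f z)) by ring. rewrite Rabs_mult.
  assert (0 <= Rabs c) by apply Rabs_pos.
  apply Rle_trans with ((Rabs c + 1) * (eta / (Rabs c + 1))).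
  - assert (0 <= Rabs (f x - f z)) by apply Rabs_pos. nra.
  - right. field. lra.
Qed.

Lemma pcont_minus f g z : pcont f z -> pcont g z -> pcont (fun x => f x - g x) z.
Proof.
  intros Hf Hg. assert (H := pcont_plus f (fun x => -1 * g x) z Hf (pcont_scal (-1) g z Hg)).
  intros eta He. destruct (H eta He) as [e [He' H1]]. exists e. split; [lra|].
  intros x Hx. specialize (H1 x Hx). replace (f x - g x - (f z - g z)) with (f x + -1 * g x - (f z + -1 * g z)) by ring. exact H1.
Qed.

Lemma pcont_mult f g z : pcont f z -> pcont g z -> pcont (fun x => f x * g x) z.
Proof.
  intros Hf Hg eta H.
  set (K := Rabs (f z) + Rabs (g z) + 1).
  assert (HK : 1 <= K) by (unfold K; assert (0 <= Rabs (f z)) by apply Rabs_pos; assert (0 <= Rabs (g z)) by apply Rabs_pos; lra).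
  set (r := Rmin 1 (eta / K)).
  assert (Hr : 0 < r) by (unfold r; apply Rmin_glb_lt; [lra| apply Rdiv_lt_0_compat; lra]).
  assert (Hr1 : r <= 1) by apply Rmin_l.
  assert (Hr2 : r * K <= eta).
  { apply Rle_trans with ((eta / K) * K); [apply Rmult_le_compat_r; [lra|apply Rmin_r]|].
    right. field. lra. }
  destruct (Hf r Hr) as [e1 [He1 H1]]. destruct (Hg r Hr) as [e2 [He2 H2]].
  exists (Rmin e1 e2). split; [apply Rmin_glb_lt; lra|]. intros x Hx.
  assert (A := H1 x (Rle_trans _ _ _ Hx (Rmin_l _ _))).
  assert (B := H2 x (Rle_trans _ _ _ Hx (Rmin_r _ _))).
  replace (f x * g x - f z * g z) with ((f x - f z) * (g x - g z) + f z * (g x - g z) + g z * (f x - f z)) by ring.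
  eapply Rle_trans; [apply Rabs_triang|]. eapply Rle_trans; [apply Rplus_le_compat_r, Rabs_triang|].
  rewrite !Rabs_mult.
  assert (0 <= Rabs (f x - f z)) by apply Rabs_pos. assert (0 <= Rabs (g x - g z)) by apply Rabs_pos.
  assert (0 <= Rabs (f z)) by apply Rabs_pos. assert (0 <= Rabs (g z)) by apply Rabs_pos.
  unfold K in *. nra.
Qed.

Lemma pcont_max0 f z : pcont f z -> pcont (fun x => Rmax 0 (f x)) z.
Proof.
  intros Hf eta H. destruct (Hf eta H) as [e [He H1]]. exists e. split; [lra|].
  intros x Hx. specialize (H1 x Hx). revert H1. unfold Rmax. repeat destruct Rle_dec; intros H1;
  unfold Rabs in *; repeat destruct Rcase_abs; lra.
Qed.

Definition lin (c1 c2 c3 c4 : R) (p : pt) : R :=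
  c1 * pE p + c2 * pM p + c3 * pF p + c4 * pMs p.

Lemma lin_psum c1 c2 c3 c4 n f :
  lin c1 c2 c3 c4 (psum n f) = rsum n (fun i => lin c1 c2 c3 c4 (f i)).
Proof. induction n; simpl; unfold lin in *; simpl in *; [ring|]. rewrite <- IHn. ring. Qed.

Lemma lin_dist c1 c2 c3 c4 p q :
  Rabs (lin c1 c2 c3 c4 p - lin c1 c2 c3 c4 q) <=
  (Rabs c1 + Rabs c2 + Rabs c3 + Rabs c4) * pdist p q.
Proof.
  unfold lin.
  replace (c1 * pE p + c2 * pM p + c3 * pF p + c4 * pMs p -
           (c1 * pE q + c2 * pM q + c3 * pF q + c4 * pMs q)) with
    (c1 * (pE p - pE q) + c2 * (pM p - pM q) + c3 * (pF p - pF q) + c4 * (pMs p - pMs q)) by ring.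
  eapply Rle_trans; [apply Rabs_triang|]. eapply Rle_trans; [apply Rplus_le_compat_r, Rabs_triang|].
  eapply Rle_trans; [apply Rplus_le_compat_r, Rplus_le_compat_r, Rabs_triang|].
  rewrite !Rabs_mult.
  assert (H1 := distE p q). assert (H2 := distM p q). assert (H3 := distF p q). assert (H4 := distMs p q).
  assert (0 <= Rabs c1) by apply Rabs_pos. assert (0 <= Rabs c2) by apply Rabs_pos.
  assert (0 <= Rabs c3) by apply Rabs_pos. assert (0 <= Rabs c4) by apply Rabs_pos.
  nra.
Qed.

Lemma null4_empty : null4 (fun _ => False).
Proof.
  intros eps H. exists (fun _ => pzero), (fun _ => pzero). split; [|split].
  - intros; simpl; lra.
  - intros x [].
  - intros m. assert (Hb : box_vol pzero pzero = 0) by (unfold box_vol; simpl; ring).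
    rewrite Hb. induction m; cbn [rsum]; lra.
Qed.

Lemma fil_bound (Xf : pt -> pt) z v c1 c2 c3 c4 (B : pt -> R) :
  filippov_set Xf z v -> pcont B z ->
  (forall x, Dp x -> lin c1 c2 c3 c4 (Xf x) <= B x) ->
  lin c1 c2 c3 c4 v <= B z.
Proof.
  intros Hv HB Hx.
  set (S := Rabs c1 + Rabs c2 + Rabs c3 + Rabs c4).
  assert (HS : 0 <= S) by (unfold S; assert (0 <= Rabs c1) by apply Rabs_pos; assert (0 <= Rabs c2) by apply Rabs_pos;
     assert (0 <= Rabs c3) by apply Rabs_pos; assert (0 <= Rabs c4) by apply Rabs_pos; lra).
  apply Rnot_lt_le. intros Hlt.
  set (eta := lin c1 c2 c3 c4 v - B z).
  destruct (HB (eta/2) ltac:(unfold eta; lra)) as [e [He HBe]].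
  destruct (Hv e He _ null4_empty (eta / (4 * (S + 1)))) as [n [w [p [Hwp [Hw1 Hd]]]]].
  { apply Rdiv_lt_0_compat; unfold eta; lra. }
  set (q := psum n (fun i => pscale (w i) (p i))).
  assert (Hq : lin c1 c2 c3 c4 q <= B z + eta / 2).
  { unfold q. rewrite lin_psum.
    apply Rle_trans with (rsum n (fun i => w i * (B z + eta/2))).
    - apply rsum_le. intros i Hi. destruct (Hwp i Hi) as [Hw0 [x [HDx [Hdx [_ ->]]]]].
      assert (lin c1 c2 c3 c4 (pscale (w i) (Xf x)) = w i * lin c1 c2 c3 c4 (Xf x)) by (unfold lin; simpl; ring).
      rewrite H. apply Rmult_le_compat_l; [exact Hw0|].
      assert (A1 := Hx x HDx). assert (A2 := HBe x Hdx). apply abs_le_e in A2. lra.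
    - right. transitivity ((B z + eta / 2) * rsum n w); [|rewrite Hw1; ring].
      rewrite <- rsum_scal. apply f_equal2; [reflexivity|].
      apply functional_extensionality. intros; ring. }
  assert (Hl := lin_dist c1 c2 c3 c4 v q). apply abs_le_e in Hl.
  assert (Hpd : 0 <= pdist v q) by (unfold pdist; apply sqrt_pos).
  assert (S * pdist v q <= eta / 4).
  { apply Rle_trans with ((S + 1) * (eta / (4 * (S + 1)))).
    - apply Rle_trans with ((S+1) * pdist v q); [rewrite Rmult_plus_distr_r; lra|]. apply Rmult_le_compat_l; [lra|]. fold q in Hd. lra.
    - right. field. lra. }
  fold S in Hl. unfold eta in *. lra.
Qed.

Lemma posstep (g : R -> R) t d Bb :
  derivable_pt_lim g t d -> (0 <= g t -> d <= Bb) -> 0 <= Bb ->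
  forall eps, 0 < eps -> exists delta, 0 < delta /\ forall h, 0 < h < delta ->
    Rmax 0 (g (t + h)) - Rmax 0 (g t) <= (Bb + eps) * h.
Proof.
  intros Hd Hb HB eps Heps.
  destruct (Hd eps Heps) as [[del1 Hdel1] H1]. simpl in H1.
  assert (Hincr : forall h, 0 < h < del1 -> g (t + h) - g t <= (d + eps) * h).
  { intros h Hh. assert (A := H1 h ltac:(lra) ltac:(rewrite Rabs_right; lra)).
    apply Rabs_def2 in A. destruct A as [A _].
    assert (A' : (g (t + h) - g t) / h < d + eps) by lra.
    apply Rmult_lt_compat_r with (r := h) in A'; [|lra].
    unfold Rdiv in A'. rewrite Rmult_assoc, Rinv_l, Rmult_1_r in A' by lra. lra. }
  destruct (Rle_or_lt 0 (g t)) as [Hg|Hg].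
  - exists del1. split; [lra|]. intros h Hh. specialize (Hincr h Hh).
    assert (d <= Bb) by auto.
    unfold Rmax. repeat destruct Rle_dec; nra.
  - set (r := - g t / (Rabs d + eps + 1)).
    assert (Hr : 0 < r) by (unfold r; apply Rdiv_lt_0_compat; [lra|]; assert (0 <= Rabs d) by apply Rabs_pos; lra).
    exists (Rmin del1 r). split; [apply Rmin_glb_lt; lra|]. intros h Hh.
    assert (Hh1 : h < del1) by (eapply Rlt_le_trans; [apply Hh|apply Rmin_l]).
    assert (Hh2 : h < r) by (eapply Rlt_le_trans; [apply Hh|apply Rmin_r]).
    specialize (Hincr h ltac:(lra)).
    assert (Had : d <= Rabs d) by apply Rle_abs.
    assert (Hrr : (Rabs d + eps + 1) * r = - g t) by (unfold r; field; assert (0 <= Rabs d) by apply Rabs_pos; lra).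
    assert (g (t + h) < 0).
    { assert ((Rabs d + eps + 1) * h < (Rabs d + eps + 1) * r).
      { apply Rmult_lt_compat_l; [assert (0 <= Rabs d) by apply Rabs_pos; lra|lra]. }
      nra. }
    unfold Rmax. repeat destruct Rle_dec; nra.
Qed.

Lemma theta_bound bE nu nE a dF dM gam kap E M Ms :
  0 < dF -> 0 < a -> 0 < nu < 1 -> 0 < nE -> 0 < dM -> 0 < gam -> 0 < kap ->
  0 < bE * nu * nE - dF * a -> kap * (bE * nu * nE - dF * a) <= gam * dF * a ->
  0 <= E -> 0 <= M -> 0 <= Ms ->
  bE * (nu * nE * E * (M / (M + gam * Ms))) <=
  dF * a * E + (bE * nu * nE - dF * a) / ((1 - nu) * nE) *
    (Rmax 0 ((1 - nu) * nE * E - dM * M) + dM * Rmax 0 (M - kap * Ms)).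
Proof.
  intros HdF Ha Hnu HnE HdM Hgam Hkap HD HkD HE HM HMs.
  set (D := bE * nu * nE - dF * a).
  set (Kc := D / ((1 - nu) * nE)).
  assert (HKc : 0 < Kc) by (unfold Kc; apply Rdiv_lt_0_compat; [exact HD| apply Rmult_lt_0_compat; lra]).
  assert (HKc2 : Kc * ((1 - nu) * nE) = D) by (unfold Kc; field; split; lra).
  set (r3 := Rmax 0 ((1 - nu) * nE * E - dM * M)).
  set (r2 := Rmax 0 (M - kap * Ms)).
  assert (Hr3 : 0 <= r3 /\ (1 - nu) * nE * E - dM * M <= r3) by (unfold r3, Rmax; destruct Rle_dec; lra).
  assert (Hr2 : 0 <= r2 /\ M - kap * Ms <= r2) by (unfold r2, Rmax; destruct Rle_dec; lra).
  assert (HR : 0 <= Kc * (r3 + dM * r2)) by (apply Rmult_le_pos; nra).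
  destruct (Req_dec (M + gam * Ms) 0) as [H0|H0].
  - assert (M = 0) by nra. subst M. unfold Rdiv. rewrite Rmult_0_l, Rmult_0_r, Rmult_0_r.
    assert (0 <= dF * a * E) by (apply Rmult_le_pos; nra). lra.
  - assert (Hden : 0 < M + gam * Ms) by nra.
    set (den := M + gam * Ms) in *.
    set (th := M / den).
    assert (Hth : th * den = M) by (unfold th; field; lra).
    apply Rmult_le_reg_r with den; [exact Hden|].
    assert (S1 : bE * (nu * nE * E * th) * den - dF * a * E * den = E * (D * M - dF * a * gam * Ms)).
    { replace (bE * (nu * nE * E * th) * den) with (bE * nu * nE * E * (th * den)) by ring.
      rewrite Hth. unfold D, den. ring. }
    assert (S2 : E * (D * M - dF * a * gam * Ms) <= E * D * (M - kap * Ms)).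
    { assert (0 <= E * Ms * (gam * dF * a - kap * D)) by (apply Rmult_le_pos; [nra|fold D in HkD; lra]). nra. }
    assert (S3 : E * D = Kc * (((1 - nu) * nE * E - dM * M) + dM * M)).
    { rewrite <- HKc2. ring. }
    assert (S4 : Kc * (((1 - nu) * nE * E - dM * M) + dM * M) * (M - kap * Ms) <= Kc * (r3 + dM * r2) * den).
    { apply Rle_trans with (Kc * ((((1 - nu) * nE * E - dM * M) + dM * M) * (M - kap * Ms))); [right; ring|].
      rewrite (Rmult_assoc Kc). apply Rmult_le_compat_l; [lra|].
      destruct (Rle_or_lt (M - kap * Ms) 0) as [Hg|Hg].
      + assert (0 <= ((1 - nu) * nE * E - dM * M) + dM * M) by (replace (((1 - nu) * nE * E - dM * M) + dM * M) with ((1 - nu) * nE * E) by ring;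
            apply Rmult_le_pos; [apply Rmult_le_pos|]; lra).
        assert (0 <= (r3 + dM * r2) * den) by (apply Rmult_le_pos; nra). nra.
      + assert (Hr2e : r2 = M - kap * Ms) by (unfold r2, Rmax; destruct Rle_dec; lra).
        assert (Hg2 : M - kap * Ms <= den) by (unfold den; nra).
        assert (A1 : ((1 - nu) * nE * E - dM * M) * (M - kap * Ms) <= r3 * den).
        { apply Rle_trans with (r3 * (M - kap * Ms)); [apply Rmult_le_compat_r; lra|].
          apply Rmult_le_compat_l; lra. }
        assert (A2 : dM * M * (M - kap * Ms) <= dM * r2 * den).
        { rewrite Hr2e. assert (M <= den) by (unfold den; nra).
          assert (0 <= dM * (M - kap * Ms)) by nra. nra. }
        nra. }
    replace (bE * (nu * nE * E * (M / den)) * den) with (bE * (nu * nE * E * th) * den) by reflexivity.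
    assert (E * D * (M - kap * Ms) = Kc * (((1 - nu) * nE * E - dM * M) + dM * M) * (M - kap * Ms)) by (rewrite S3; ring).
    rewrite Rmult_plus_distr_r. nra.
Qed.

Lemma Rdiv_le_0_compat a b : 0 <= a -> 0 < b -> 0 <= a / b.
Proof. intros. unfold Rdiv. apply Rmult_le_pos; [lra|left; apply Rinv_0_lt_compat; lra]. Qed.

Definition g1f bE nE dE K (x : pt) := bE * pF x * (1 - pE x / K) - (nE + dE) * pE x.
Definition g2f kap (x : pt) := pM x - kap * pMs x.
Definition g3f nu nE dM (x : pt) := (1 - nu) * nE * pE x - dM * pM x.

Ltac pc := unfold g1f, g2f, g3f, Rdiv;
  repeat first [ apply pcont_const | apply pcont_E | apply pcont_M | apply pcont_F | apply pcont_Ms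
               | apply pcont_max0 | apply pcont_minus | apply pcont_plus | apply pcont_mult ].

Lemma bound3 bE nE dE dM dF ds K nu gam k z v :
  0 < nu < 1 -> 0 < nE -> 0 < dM ->
  filippov_set (X bE nE dE dM dF ds K nu gam k) z v ->
  0 <= g3f nu nE dM z ->
  lin ((1 - nu) * nE) (- dM) 0 0 v <= (1 - nu) * nE * Rmax 0 (g1f bE nE dE K z).
Proof.
  intros Hnu HnE HdM Hv Hg.
  assert (H := fil_bound _ z v ((1 - nu) * nE) (- dM) 0 0
     (fun x => (1 - nu) * nE * g1f bE nE dE K x - dM * g3f nu nE dM x) Hv).
  assert (Hc : pcont (fun x => (1 - nu) * nE * g1f bE nE dE K x - dM * g3f nu nE dM x) z) by pc.
  specialize (H Hc). simpl in H.
  assert (H' : lin ((1 - nu) * nE) (- dM) 0 0 v <=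
    (1 - nu) * nE * g1f bE nE dE K z - dM * g3f nu nE dM z).
  { apply H. intros x _. unfold lin, X, g1f, g3f; simpl. apply Req_le. ring. }
  assert (0 < (1 - nu) * nE) by (apply Rmult_lt_0_compat; lra).
  assert (g1f bE nE dE K z <= Rmax 0 (g1f bE nE dE K z)) by apply Rmax_r.
  nra.
Qed.

Lemma bound2 bE nE dE dM dF ds K nu gam k kap z v :
  0 < k -> 0 < kap -> ds - k <= kap * k ->
  filippov_set (X bE nE dE dM dF ds K nu gam k) z v ->
  Dp z -> 0 <= g2f kap z ->
  lin 0 1 0 (- kap) v <= Rmax 0 (g3f nu nE dM z).
Proof.
  intros Hk Hkap Hkk Hv HDz Hg.
  set (B := fun x => (1 - nu) * nE * pE x - dM * pM x - kap * (k * (pM x + pMs x) - ds * pMs x)).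
  assert (H := fil_bound _ z v 0 1 0 (- kap) B Hv).
  assert (Hc : pcont B z) by (unfold B; pc).
  specialize (H Hc).
  assert (H' : lin 0 1 0 (- kap) v <= B z).
  { apply H. intros x _. unfold lin, X, B; simpl. apply Req_le. ring. }
  unfold B in H'. unfold g2f, g3f in *. destruct HDz as [HE [HM [HF HMs]]].
  assert (A1 : kap * k * (kap * pMs z) <= kap * k * pM z) by (apply Rmult_le_compat_l; nra).
  assert (A2 : kap * (ds - k) * pMs z <= kap * (kap * k) * pMs z).
  { apply Rmult_le_compat_r; [lra|]. apply Rmult_le_compat_l; lra. }
  assert ((1 - nu) * nE * pE z - dM * pM z <= Rmax 0 ((1 - nu) * nE * pE z - dM * pM z)) by apply Rmax_r.
  nra.
Qed.

Lemma bound1 bE nE dE dM dF ds K nu gam k kap z v :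
  0 < bE -> 0 < nE -> 0 < dE -> 0 < dM -> 0 < dF -> 0 < K -> 0 < nu < 1 -> 0 < gam -> 0 < kap ->
  0 < bE * nu * nE - dF * (nE + dE) ->
  kap * (bE * nu * nE - dF * (nE + dE)) <= gam * dF * (nE + dE) ->
  filippov_set (X bE nE dE dM dF ds K nu gam k) z v ->
  Dp z -> 0 <= g1f bE nE dE K z ->
  lin (- (bE * pF z / K + (nE + dE))) 0 (bE * (1 - pE z / K)) 0 v <=
  (bE * nu * nE - dF * (nE + dE)) / ((1 - nu) * nE) * (1 + dM) *
    (Rmax 0 (g2f kap z) + Rmax 0 (g3f nu nE dM z)).
Proof.
  intros HbE HnE HdE HdM HdF HK Hnu Hgam Hkap HD HkD Hv HDz Hg.
  set (a := nE + dE) in *.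
  set (D := bE * nu * nE - dF * a) in *.
  set (Kc := D / ((1 - nu) * nE)).
  assert (HKc : 0 < Kc) by (unfold Kc; apply Rdiv_lt_0_compat; [exact HD| apply Rmult_lt_0_compat; lra]).
  destruct HDz as [HE [HM [HF HMs]]].
  set (E0 := pE z) in *. set (F0 := pF z) in *.
  assert (HE0K : 0 <= 1 - E0 / K <= 1).
  { unfold g1f in Hg. fold E0 F0 in Hg. fold a in Hg.
    assert (0 <= E0 / K) by (apply Rdiv_le_0_compat; lra).
    split; [|lra].
    destruct (Rle_or_lt 0 (1 - E0 / K)) as [H0|H0]; [exact H0|].
    exfalso. assert (E0 / K > 1) by lra.
    assert (E0 > K).
    { apply Rmult_lt_reg_r with (/ K); [apply Rinv_0_lt_compat; lra|]. rewrite Rinv_r by lra. unfold Rdiv in *. lra. }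
    assert (bE * F0 * (1 - E0 / K) <= 0).
    { assert (0 <= bE * F0) by (apply Rmult_le_pos; lra). nra. }
    assert (0 < a * E0) by (apply Rmult_lt_0_compat; unfold a; lra). lra. }
  set (c := 1 - E0 / K) in *.
  set (B := fun x => - (bE * F0 / K + a) * g1f bE nE dE K x
        + c * (dF * a * pE x + Kc * (Rmax 0 (g3f nu nE dM x) + dM * Rmax 0 (g2f kap x)))
        - bE * c * dF * pF x).
  assert (H := fil_bound _ z v (- (bE * F0 / K + a)) 0 (bE * c) 0 B Hv).
  assert (Hc : pcont B z) by (unfold B; pc).
  specialize (H Hc).
  assert (H' : lin (- (bE * F0 / K + a)) 0 (bE * c) 0 v <= B z).
  { apply H. intros x [HxE [HxM [HxF HxMs]]].
    assert (T := theta_bound bE nu nE a dF dM gam kap (pE x) (pM x) (pMs x)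
                   HdF ltac:(unfold a; lra) Hnu HnE HdM Hgam Hkap HD HkD HxE HxM HxMs).
    fold D Kc in T. unfold g3f, g2f in *.
    unfold lin, X, B; simpl. unfold g1f. fold a.
    set (th := pM x / (pM x + gam * pMs x)) in *.
    set (R3 := Rmax 0 ((1 - nu) * nE * pE x - dM * pM x)) in *.
    set (R2 := Rmax 0 (pM x - kap * pMs x)) in *.
    assert (c * (bE * (nu * nE * pE x * th)) <= c * (dF * a * pE x + Kc * (R3 + dM * R2)))
      by (apply Rmult_le_compat_l; lra).
    nra. }
  unfold B in H'.
  assert (Hg1 : g1f bE nE dE K z = bE * F0 * c - a * E0) by reflexivity.
  rewrite Hg1 in H'. rewrite Hg1 in Hg.
  set (R3 := Rmax 0 (g3f nu nE dM z)) in *.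
  set (R2 := Rmax 0 (g2f kap z)) in *.
  assert (HR3 : 0 <= R3) by apply Rmax_l. assert (HR2 : 0 <= R2) by apply Rmax_l.
  assert (E1 : - (bE * F0 / K + a) * (bE * F0 * c - a * E0) + c * (dF * a * E0 + Kc * (R3 + dM * R2)) - bE * c * dF * F0
          = - (bE * F0 / K + a) * (bE * F0 * c - a * E0) + c * dF * (a * E0 - bE * F0) + c * (Kc * (R3 + dM * R2))) by ring.
  assert (c * dF * (a * E0 - bE * F0) <= 0).
  { assert (bE * F0 * c <= bE * F0) by (assert (0 <= bE * F0) by nra; nra).
    assert (0 <= c * dF) by nra. nra. }
  assert (0 <= bE * F0 / K) by (apply Rdiv_le_0_compat; nra).
  assert (0 <= (bE * F0 / K + a) * (bE * F0 * c - a * E0)) by (apply Rmult_le_pos; unfold a in *; lra).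
  assert (c * (Kc * (R3 + dM * R2)) <= Kc * (R3 + dM * R2)).
  { assert (0 <= Kc * (R3 + dM * R2)) by (apply Rmult_le_pos; nra). nra. }
  assert (Kc * (R3 + dM * R2) <= Kc * (1 + dM) * (R2 + R3)).
  { rewrite Rmult_assoc. apply Rmult_le_compat_l; [lra|]. nra. }
  fold Kc. fold E0 F0 in H'. lra.
Qed.

Lemma abs_mult_le x y X Y : Rabs x <= X -> Rabs y <= Y -> Rabs (x * y) <= X * Y.
Proof.
  intros. rewrite Rabs_mult. apply Rmult_le_compat; auto; apply Rabs_pos.
Qed.

Lemma g1_lip bE nE dE K p q Bd d :
  0 < bE -> 0 < K -> 0 <= nE + dE ->
  Rabs (pE p) <= Bd -> Rabs (pF q) <= Bd -> pdist p q <= d ->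
  Rabs (g1f bE nE dE K p - g1f bE nE dE K q) <= (bE * (1 + 2 * Bd / K) + (nE + dE)) * d.
Proof.
  intros HbE HK Ha HEp HFq Hd.
  assert (dE_ := distE p q). assert (dF_ := distF p q).
  unfold g1f.
  replace (bE * pF p * (1 - pE p / K) - (nE + dE) * pE p - (bE * pF q * (1 - pE q / K) - (nE + dE) * pE q))
    with (bE * ((pF p - pF q) * (1 - pE p / K)) - (bE / K) * (pF q * (pE p - pE q)) - (nE + dE) * (pE p - pE q))
    by (field; lra).
  assert (Hc : Rabs (1 - pE p / K) <= 1 + Bd / K).
  { unfold Rminus. eapply Rle_trans; [apply Rabs_triang|]. rewrite Rabs_R1, Rabs_Ropp.
    unfold Rdiv. rewrite Rabs_mult, (Rabs_right (/ K)) by (left; apply Rinv_0_lt_compat; lra).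
    assert (0 < / K) by (apply Rinv_0_lt_compat; lra). nra. }
  assert (A1 : Rabs ((pF p - pF q) * (1 - pE p / K)) <= d * (1 + Bd / K)) by (apply abs_mult_le; lra).
  assert (A2 : Rabs (pF q * (pE p - pE q)) <= Bd * d) by (apply abs_mult_le; lra).
  assert (A3 : Rabs (pE p - pE q) <= d) by lra.
  assert (HBd : 0 <= Bd) by (eapply Rle_trans; [apply Rabs_pos|exact HEp]).
  assert (0 < / K) by (apply Rinv_0_lt_compat; lra).
  set (X1 := (pF p - pF q) * (1 - pE p / K)) in *.
  set (X2 := pF q * (pE p - pE q)) in *.
  set (X3 := pE p - pE q) in *.
  assert (B1 : Rabs (bE * X1) <= bE * (d * (1 + Bd / K))).
  { rewrite Rabs_mult, (Rabs_right bE) by lra. apply Rmult_le_compat_l; lra. }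
  assert (B2 : Rabs (bE / K * X2) <= bE / K * (Bd * d)).
  { rewrite Rabs_mult, (Rabs_right (bE / K)) by (unfold Rdiv; nra). apply Rmult_le_compat_l; [unfold Rdiv; nra|lra]. }
  assert (B3 : Rabs ((nE + dE) * X3) <= (nE + dE) * d).
  { rewrite Rabs_mult, (Rabs_right (nE + dE)) by lra. apply Rmult_le_compat_l; lra. }
  assert (T1 := Rabs_triang (bE * X1 - bE / K * X2) (- ((nE + dE) * X3))).
  assert (T2 := Rabs_triang (bE * X1) (- (bE / K * X2))).
  rewrite Rabs_Ropp in T1, T2.
  unfold Rminus in *.
  assert (E : bE * (d * (1 + Bd * / K)) + bE * / K * (Bd * d) + (nE + dE) * d = (bE * (1 + 2 * Bd * / K) + (nE + dE)) * d) by ring.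
  unfold Rdiv in *. lra.
Qed.

Lemma g2_lip kap p q d : 0 <= kap -> pdist p q <= d ->
  Rabs (g2f kap p - g2f kap q) <= (1 + kap) * d.
Proof.
  intros Hk Hd. assert (A := distM p q). assert (B := distMs p q).
  apply abs_le_e in A. apply abs_le_e in B. apply abs_le_i. unfold g2f. nra.
Qed.

Lemma g3_lip nu nE dM p q d : 0 <= (1 - nu) * nE -> 0 <= dM -> pdist p q <= d ->
  Rabs (g3f nu nE dM p - g3f nu nE dM q) <= ((1 - nu) * nE + dM) * d.
Proof.
  intros Hk HdM Hd. assert (A := distE p q). assert (B := distM p q).
  apply abs_le_e in A. apply abs_le_e in B. apply abs_le_i. unfold g3f.
  set (c := (1 - nu) * nE) in *. nra.
Qed.

Lemma max0_lip a b : Rabs (Rmax 0 a - Rmax 0 b) <= Rabs (a - b).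
Proof. unfold Rmax. repeat destruct Rle_dec; unfold Rabs; repeat destruct Rcase_abs; lra. Qed.

Lemma dlin (z : R -> pt) t v c1 c2 c3 c4 :
  derivable_pt_lim (fun s => pE (z s)) t (pE v) ->
  derivable_pt_lim (fun s => pM (z s)) t (pM v) ->
  derivable_pt_lim (fun s => pF (z s)) t (pF v) ->
  derivable_pt_lim (fun s => pMs (z s)) t (pMs v) ->
  derivable_pt_lim (fun s => lin c1 c2 c3 c4 (z s)) t (lin c1 c2 c3 c4 v).
Proof.
  intros H1 H2 H3 H4.
  assert (A1 := derivable_pt_lim_scal _ c1 _ _ H1).
  assert (A2 := derivable_pt_lim_scal _ c2 _ _ H2).
  assert (A3 := derivable_pt_lim_scal _ c3 _ _ H3).
  assert (A4 := derivable_pt_lim_scal _ c4 _ _ H4).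
  assert (B := derivable_pt_lim_plus _ _ _ _ _ (derivable_pt_lim_plus _ _ _ _ _ (derivable_pt_lim_plus _ _ _ _ _ A1 A2) A3) A4).
  exact B.
Qed.

Lemma dg1 (z : R -> pt) t v bE nE dE K :
  derivable_pt_lim (fun s => pE (z s)) t (pE v) ->
  derivable_pt_lim (fun s => pF (z s)) t (pF v) ->
  derivable_pt_lim (fun s => g1f bE nE dE K (z s)) t
    (lin (- (bE * pF (z t) / K + (nE + dE))) 0 (bE * (1 - pE (z t) / K)) 0 v).
Proof.
  intros HE HF.
  assert (A1 := derivable_pt_lim_scal _ bE _ _ HF).
  assert (A2 := derivable_pt_lim_scal _ (/ K) _ _ HE).
  assert (A3 := derivable_pt_lim_minus _ _ _ _ _ (derivable_pt_lim_const 1 t) A2).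
  assert (A4 := derivable_pt_lim_mult _ _ _ _ _ A1 A3).
  assert (A5 := derivable_pt_lim_scal _ (nE + dE) _ _ HE).
  assert (A6 := derivable_pt_lim_minus _ _ _ _ _ A4 A5).
  replace (lin (- (bE * pF (z t) / K + (nE + dE))) 0 (bE * (1 - pE (z t) / K)) 0 v)
    with ((bE * pF v * (fct_cte 1 - mult_real_fct (/ K) (fun s => pE (z s)))%F t +
           mult_real_fct bE (fun s => pF (z s)) t * (0 - / K * pE v)) - (nE + dE) * pE v).
  - replace (fun s => g1f bE nE dE K (z s)) with
      (mult_real_fct bE (fun s => pF (z s)) * (fct_cte 1 - mult_real_fct (/ K) (fun s => pE (z s))) -
       mult_real_fct (nE + dE) (fun s => pE (z s)))%F.
    + exact A6.
    + apply functional_extensionality. intros s. unfold g1f, mult_fct, minus_fct, mult_real_fct, fct_cte. unfold Rdiv. ring.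
  - unfold lin, mult_fct, minus_fct, mult_real_fct, fct_cte. unfold Rdiv. ring.
Qed.

Lemma dg2 (z : R -> pt) t v kap :
  derivable_pt_lim (fun s => pE (z s)) t (pE v) ->
  derivable_pt_lim (fun s => pM (z s)) t (pM v) ->
  derivable_pt_lim (fun s => pF (z s)) t (pF v) ->
  derivable_pt_lim (fun s => pMs (z s)) t (pMs v) ->
  derivable_pt_lim (fun s => g2f kap (z s)) t (lin 0 1 0 (- kap) v).
Proof.
  intros. replace (fun s => g2f kap (z s)) with (fun s => lin 0 1 0 (- kap) (z s)).
  - apply dlin; auto.
  - apply functional_extensionality; intros; unfold lin, g2f; ring.
Qed.

Lemma dg3 (z : R -> pt) t v nu nE dM :
  derivable_pt_lim (fun s => pE (z s)) t (pE v) ->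
  derivable_pt_lim (fun s => pM (z s)) t (pM v) ->
  derivable_pt_lim (fun s => pF (z s)) t (pF v) ->
  derivable_pt_lim (fun s => pMs (z s)) t (pMs v) ->
  derivable_pt_lim (fun s => g3f nu nE dM (z s)) t (lin ((1 - nu) * nE) (- dM) 0 0 v).
Proof.
  intros. replace (fun s => g3f nu nE dM (z s)) with (fun s => lin ((1 - nu) * nE) (- dM) 0 0 (z s)).
  - apply dlin; auto.
  - apply functional_extensionality; intros; unfold lin, g3f; ring.
Qed.

Theorem theorem5
  (betaE nuE deltaE deltaM deltaF deltas K nu gammas k kappa : R)
  (HbetaE : 0 < betaE) (HnuE : 0 < nuE) (HdeltaE : 0 < deltaE)
  (HdeltaM : 0 < deltaM) (HdeltaF : 0 < deltaF) (Hdeltas : 0 < deltas)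
  (HK : 0 < K) (Hnu : 0 < nu < 1) (Hgammas : 0 < gammas <= 1)
  (Hds : deltaM <= deltas)
  (HR0 : 1 < repro_number betaE nu nuE deltaE deltaF)
  (Hk1 : (betaE * nu * nuE - (nuE + deltaE) * deltaF)
         / (betaE * nu * nuE - (1 - gammas) * (nuE + deltaE) * deltaF)
         * deltas < k)
  (Hk2 : k < deltas)
  (Hkappa0 : 0 < kappa)
  (Hkappa1 : (deltas - k) / k <= kappa)
  (Hkappa2 : kappa <= gammas * deltaF * (nuE + deltaE)
                      / (betaE * nu * nuE - deltaF * (nuE + deltaE))) :
  positively_invariant
    (X betaE nuE deltaE deltaM deltaF deltas K nu gammas k)
    (Mset betaE nuE deltaE deltaM K nu kappa).
Proof.
  set (a := nuE + deltaE) in *.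
  assert (Ha : 0 < a) by (unfold a; lra).
  set (D := betaE * nu * nuE - deltaF * a).
  assert (HD : 0 < D).
  { unfold repro_number in HR0. fold a in HR0.
    assert (0 < deltaF * a) by (apply Rmult_lt_0_compat; lra).
    apply (Rmult_lt_compat_r (deltaF * a)) in HR0; [|lra].
    unfold Rdiv in HR0. rewrite Rmult_assoc, Rinv_l, Rmult_1_r, Rmult_1_l in HR0 by lra.
    unfold D. lra. }
  assert (HkD : kappa * D <= gammas * deltaF * a).
  { fold D in Hkappa2. apply (Rmult_le_compat_r D) in Hkappa2; [|lra].
    unfold Rdiv in Hkappa2. rewrite Rmult_assoc, Rinv_l, Rmult_1_r in Hkappa2 by lra. lra. }
  assert (Hk0 : 0 < k).
  { set (A1 := betaE * nu * nuE - a * deltaF) in *.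
    set (A2 := betaE * nu * nuE - (1 - gammas) * a * deltaF) in *.
    assert (HA1 : 0 < A1) by (unfold A1, D in *; lra).
    assert (HA2 : A1 <= A2) by (unfold A1, A2; assert (0 <= gammas * a * deltaF) by (apply Rmult_le_pos; [apply Rmult_le_pos|]; lra); nra).
    assert (0 < A1 / A2) by (apply Rdiv_lt_0_compat; lra).
    assert (0 < A1 / A2 * deltas) by (apply Rmult_lt_0_compat; lra). lra. }
  assert (Hkk : deltas - k <= kappa * k).
  { apply (Rmult_le_compat_r k) in Hkappa1; [|lra].
    unfold Rdiv in Hkappa1. rewrite Rmult_assoc, Rinv_l, Rmult_1_r in Hkappa1 by lra. lra. }
  set (Kc := D / ((1 - nu) * nuE)).
  assert (HKc : 0 < Kc) by (unfold Kc; apply Rdiv_lt_0_compat; [exact HD| apply Rmult_lt_0_compat; lra]).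
  set (C1 := Kc * (1 + deltaM)).
  set (C3 := (1 - nu) * nuE).
  assert (HC1 : 0 < C1) by (unfold C1; apply Rmult_lt_0_compat; lra).
  assert (HC3 : 0 < C3) by (unfold C3; apply Rmult_lt_0_compat; lra).
  set (C := C1 + 1 + C3).
  assert (HC : 0 < C) by (unfold C; lra).
  intros I z HIint HI0 Hsol HM0 T HIT HT0.
  destruct Hsol as [HDp [Hlip [N [HN Hder]]]].
  set (G1 := fun u => g1f betaE nuE deltaE K (z u)).
  set (G2 := fun u => g2f kappa (z u)).
  set (G3 := fun u => g3f nu nuE deltaM (z u)).
  set (W := fun u => Rmax 0 (G1 u) + Rmax 0 (G2 u) + Rmax 0 (G3 u)).
  assert (HW0 : forall u, 0 <= W u).
  { intros u. unfold W. assert (H1 := Rmax_l 0 (G1 u)). assert (H2 := Rmax_l 0 (G2 u)). assert (H3 := Rmax_l 0 (G3 u)). lra. }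
  assert (HIab : forall u, 0 <= u <= T -> I u).
  { intros u Hu. apply (HIint 0 u T); auto. }
  assert (DL : forall t, I t -> ~ N t -> forall m, W t <= m -> forall eps, 0 < eps ->
            exists delta, 0 < delta /\ forall h, 0 < h < delta -> W (t + h) - W t <= (C * m + eps) * h).
  { intros t It HNt m Hm eps Heps.
    destruct (Hder t It HNt) as [v [HE [HM [HF [HMs Hfil]]]]].
    assert (HDz := HDp t It).
    assert (HR1 := Rmax_l 0 (G1 t)). assert (HR2 := Rmax_l 0 (G2 t)). assert (HR3 := Rmax_l 0 (G3 t)).
    assert (HWt : W t = Rmax 0 (G1 t) + Rmax 0 (G2 t) + Rmax 0 (G3 t)) by reflexivity.
    assert (Hm0 : 0 <= m) by (specialize (HW0 t); lra).
    assert (D1 := dg1 z t v betaE nuE deltaE K HE HF).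
    assert (D2 := dg2 z t v kappa HE HM HF HMs).
    assert (D3 := dg3 z t v nu nuE deltaM HE HM HF HMs).
    destruct (posstep G1 t _ (C1 * m) D1) with (eps := eps / 3) as [d1 [Hd1 P1]].
    { intros Hg. assert (B := bound1 betaE nuE deltaE deltaM deltaF deltas K nu gammas k kappa (z t) v
         HbetaE HnuE HdeltaE HdeltaM HdeltaF HK Hnu ltac:(lra) Hkappa0 HD HkD Hfil HDz Hg).
      fold a D Kc C1 in B. fold (G2 t) (G3 t) in B.
      assert (C1 * (Rmax 0 (G2 t) + Rmax 0 (G3 t)) <= C1 * m) by (apply Rmult_le_compat_l; lra). fold a. lra. }
    { apply Rmult_le_pos; lra. }
    { lra. }
    destruct (posstep G2 t _ (1 * m) D2) with (eps := eps / 3) as [d2 [Hd2 P2]].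
    { intros Hg. assert (B := bound2 betaE nuE deltaE deltaM deltaF deltas K nu gammas k kappa (z t) v
         Hk0 Hkappa0 Hkk Hfil HDz Hg). fold (G3 t) in B. lra. }
    { lra. }
    { lra. }
    destruct (posstep G3 t _ (C3 * m) D3) with (eps := eps / 3) as [d3 [Hd3 P3]].
    { intros Hg. assert (B := bound3 betaE nuE deltaE deltaM deltaF deltas K nu gammas k (z t) v
         Hnu HnuE HdeltaM Hfil Hg). fold C3 (G1 t) in B.
      assert (C3 * Rmax 0 (G1 t) <= C3 * m) by (apply Rmult_le_compat_l; lra). fold C3. lra. }
    { apply Rmult_le_pos; lra. }
    { lra. }
    exists (Rmin d1 (Rmin d2 d3)). split.
    { apply Rmin_glb_lt; [lra|apply Rmin_glb_lt; lra]. }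
    intros h Hh.
    assert (Hh1 : h < d1) by (eapply Rlt_le_trans; [apply Hh|apply Rmin_l]).
    assert (Hh23 : h < Rmin d2 d3) by (eapply Rlt_le_trans; [apply Hh|apply Rmin_r]).
    assert (Hh2 : h < d2) by (eapply Rlt_le_trans; [apply Hh23|apply Rmin_l]).
    assert (Hh3 : h < d3) by (eapply Rlt_le_trans; [apply Hh23|apply Rmin_r]).
    specialize (P1 h ltac:(lra)). specialize (P2 h ltac:(lra)). specialize (P3 h ltac:(lra)).
    unfold W. unfold C. nra. }
  assert (LL : forall s, I s -> exists delta LW, 0 < delta /\ 0 <= LW /\
            forall u w, I u -> I w -> Rabs (u - s) < delta -> Rabs (w - s) < delta ->
            Rabs (W u - W w) <= LW * Rabs (u - w)).
  { intros s Is. destruct (Hlip s Is) as [del [L0 [Hdel HL]]].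
    set (L := Rabs L0).
    assert (HLp : 0 <= L) by apply Rabs_pos.
    set (Bd := Rabs (pE (z s)) + Rabs (pF (z s)) + L * del).
    assert (HBd0 : 0 <= Bd) by (unfold Bd; assert (0 <= Rabs (pE (z s))) by apply Rabs_pos;
       assert (0 <= Rabs (pF (z s))) by apply Rabs_pos; assert (0 <= L * del) by (apply Rmult_le_pos; lra); lra).
    assert (Hpd : forall u w, I u -> I w -> Rabs (u - s) < del -> Rabs (w - s) < del ->
               pdist (z u) (z w) <= L * Rabs (u - w)).
    { intros u w Iu Iw Hu Hw. eapply Rle_trans; [apply HL; auto|].
      apply Rmult_le_compat_r; [apply Rabs_pos|apply Rle_abs]. }
    assert (HBd : forall u, I u -> Rabs (u - s) < del -> Rabs (pE (z u)) <= Bd /\ Rabs (pF (z u)) <= Bd).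
    { intros u Iu Hu. assert (P := Hpd u s Iu Is Hu ltac:(rewrite Rminus_diag, Rabs_R0; lra)).
      assert (L * Rabs (u - s) <= L * del) by (apply Rmult_le_compat_l; lra).
      assert (A := distE (z u) (z s)). assert (B := distF (z u) (z s)).
      apply abs_le_e in A. apply abs_le_e in B.
      assert (0 <= Rabs (pE (z s))) by apply Rabs_pos. assert (0 <= Rabs (pF (z s))) by apply Rabs_pos.
      assert (A2 := Rle_abs (pE (z s))). assert (A3 := Rle_abs (- pE (z s))). rewrite Rabs_Ropp in A3.
      assert (B2 := Rle_abs (pF (z s))). assert (B3 := Rle_abs (- pF (z s))). rewrite Rabs_Ropp in B3.
      unfold Bd. split; apply abs_le_i; lra. }
    set (K1 := betaE * (1 + 2 * Bd / K) + a).
    set (K2 := 1 + kappa).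
    set (K3 := (1 - nu) * nuE + deltaM).
    assert (HK1 : 0 <= K1).
    { unfold K1. assert (0 <= 2 * Bd / K) by (apply Rdiv_le_0_compat; lra). nra. }
    assert (HK3 : 0 <= K3) by (unfold K3; assert (0 < (1 - nu) * nuE) by (apply Rmult_lt_0_compat; lra); lra).
    exists del, ((K1 + K2 + K3) * L). split; [exact Hdel|]. split; [apply Rmult_le_pos; unfold K2 in *; lra|].
    intros u w Iu Iw Hu Hw.
    set (d := L * Rabs (u - w)).
    assert (Hd := Hpd u w Iu Iw Hu Hw). fold d in Hd.
    destruct (HBd u Iu Hu) as [HEu _]. destruct (HBd w Iw Hw) as [_ HFw].
    assert (A1 := g1_lip betaE nuE deltaE K (z u) (z w) Bd d HbetaE HK ltac:(lra) HEu HFw Hd).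
    assert (A2 := g2_lip kappa (z u) (z w) d ltac:(lra) Hd).
    assert (A3 := g3_lip nu nuE deltaM (z u) (z w) d ltac:(apply Rmult_le_pos; lra) ltac:(lra) Hd).
    assert (M1 := max0_lip (G1 u) (G1 w)). assert (M2 := max0_lip (G2 u) (G2 w)). assert (M3 := max0_lip (G3 u) (G3 w)).
    unfold W.
    replace (Rmax 0 (G1 u) + Rmax 0 (G2 u) + Rmax 0 (G3 u) - (Rmax 0 (G1 w) + Rmax 0 (G2 w) + Rmax 0 (G3 w)))
      with ((Rmax 0 (G1 u) - Rmax 0 (G1 w)) + (Rmax 0 (G2 u) - Rmax 0 (G2 w)) + (Rmax 0 (G3 u) - Rmax 0 (G3 w))) by ring.
    eapply Rle_trans; [apply Rabs_triang|]. eapply Rle_trans; [apply Rplus_le_compat_r, Rabs_triang|].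
    fold a K1 in A1. fold K3 in A3. unfold G1, G2, G3 in *.
    replace ((K1 + K2 + K3) * L * Rabs (u - w)) with (K1 * d + K2 * d + K3 * d) by (unfold d; ring).
    unfold K2. lra. }
  assert (HWT : W T <= 0).
  { apply (real_ind 0 T (fun u => W u <= 0) HT0); [ | | | lra].
    - destruct HM0 as [[_ H1] [[_ H2] [_ H3]]].
      unfold W, G1, G2, G3, g1f, g2f, g3f. unfold a in *.
      unfold Rmax. repeat destruct Rle_dec; lra.
    - intros s Hs Hbel. assert (Is : I s) by (apply HIab; lra).
      destruct (LL s Is) as [del [LW [Hdel [HLW HL]]]].
      apply Rnot_lt_le. intros HWs.
      set (r := Rmin (del / 2) (Rmin s (W s / (2 * (LW + 1))))).
      assert (Hr0 : 0 < r).
      { unfold r. apply Rmin_glb_lt; [lra|apply Rmin_glb_lt; [lra|apply Rdiv_lt_0_compat; lra]]. }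
      assert (Hr1 : r <= del / 2) by apply Rmin_l.
      assert (Hr2 : r <= s) by (eapply Rle_trans; [apply Rmin_r|apply Rmin_l]).
      assert (Hr3 : r <= W s / (2 * (LW + 1))) by (eapply Rle_trans; [apply Rmin_r|apply Rmin_r]).
      assert (Hu := Hbel (s - r) ltac:(lra)).
      assert (Iu : I (s - r)) by (apply HIab; lra).
      assert (A := HL s (s - r) Is Iu ltac:(rewrite Rminus_diag, Rabs_R0; lra)
                     ltac:(replace (s - r - s) with (- r) by ring; rewrite Rabs_Ropp, Rabs_right; lra)).
      replace (s - (s - r)) with r in A by ring. rewrite (Rabs_right r) in A by lra.
      apply abs_le_e in A.
      assert (LW * r <= LW * (W s / (2 * (LW + 1)))) by (apply Rmult_le_compat_l; lra).
      assert (LW * (W s / (2 * (LW + 1))) < W s).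
      { apply Rle_lt_trans with ((LW + 1) * (W s / (2 * (LW + 1)))).
        - assert (0 <= W s / (2 * (LW + 1))) by (apply Rdiv_le_0_compat; lra). nra.
        - replace ((LW + 1) * (W s / (2 * (LW + 1)))) with (W s / 2) by (field; lra). lra. }
      lra.
    - intros s Hs Hall. assert (Is : I s) by (apply HIab; lra).
      assert (HWs : W s <= 0) by (apply Hall; lra).
      destruct (LL s Is) as [del [LW [Hdel [HLW HL]]]].
      set (h := Rmin (Rmin (del / 2) (T - s)) (/ (2 * C + 2))).
      assert (Hh0 : 0 < h).
      { unfold h. apply Rmin_glb_lt; [apply Rmin_glb_lt; lra| apply Rinv_0_lt_compat; lra]. }
      assert (Hh1 : h <= del / 2) by (eapply Rle_trans; [apply Rmin_l|apply Rmin_l]).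
      assert (Hh2 : h <= T - s) by (eapply Rle_trans; [apply Rmin_l|apply Rmin_r]).
      assert (Hh3 : h <= / (2 * C + 2)) by apply Rmin_r.
      assert (HCh : C * h <= / 2).
      { apply Rle_trans with (C * / (2 * C + 2)); [apply Rmult_le_compat_l; lra|].
        apply Rle_trans with ((C + 1) * / (2 * C + 2)).
        - assert (0 < / (2 * C + 2)) by (apply Rinv_0_lt_compat; lra). nra.
        - right. field. lra. }
      assert (Hin : forall u, s <= u <= s + h -> I u /\ Rabs (u - s) < del).
      { intros u Hu. split; [apply HIab; lra|]. rewrite Rabs_right; lra. }
      assert (Claim : forall n u, s <= u <= s + h -> W u <= (/ 2) ^ n * (LW * h)).
      { induction n as [|n IH]; intros u Hu.
        - simpl. destruct (Hin u Hu) as [Iu Hu']. assert (A := HL u s Iu Is Hu' ltac:(rewrite Rminus_diag, Rabs_R0; lra)).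
          apply abs_le_e in A. rewrite (Rabs_right (u - s)) in A by lra.
          assert (LW * (u - s) <= LW * h) by (apply Rmult_le_compat_l; lra). lra.
        - set (m := (/ 2) ^ n * (LW * h)) in *.
          assert (Hm0 : 0 <= m) by (unfold m; apply Rmult_le_pos; [apply pow_le; lra| apply Rmult_le_pos; lra]).
          set (f := fun w => W w - C * m * (w - s)).
          assert (Hf : f u <= f s).
          { apply (core f s u (LW + C * m) N); [lra| apply Rplus_le_le_0_compat; [lra| apply Rmult_le_pos; lra] | | exact HN |].
            - intros x y Hx Hy. destruct (Hin x ltac:(lra)) as [Ix Hx']. destruct (Hin y ltac:(lra)) as [Iy Hy'].
              assert (A := HL x y Ix Iy Hx' Hy'). unfold f.
              replace (W x - C * m * (x - s) - (W y - C * m * (y - s))) with ((W x - W y) + (- (C * m)) * (x - y)) by ring.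
              eapply Rle_trans; [apply Rabs_triang|]. rewrite Rabs_mult, Rabs_Ropp, (Rabs_right (C * m)) by (apply Rle_ge, Rmult_le_pos; lra).
              lra.
            - intros t Ht HNt eps Heps. destruct (Hin t ltac:(lra)) as [It _].
              destruct (DL t It HNt m (IH t ltac:(lra)) eps Heps) as [dl [Hdl P]].
              exists dl. split; [exact Hdl|]. intros h' Hh'. specialize (P h' Hh'). unfold f.
              replace (W (t + h') - C * m * (t + h' - s) - (W t - C * m * (t - s))) with (W (t + h') - W t - C * m * h') by ring.
              lra. }
          unfold f in Hf. replace (s - s) with 0 in Hf by ring.
          assert (C * m * (u - s) <= C * m * h) by (apply Rmult_le_compat_l; [apply Rmult_le_pos|]; lra).
          assert (C * m * h <= m / 2).
          { replace (C * m * h) with (m * (C * h)) by ring.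
            apply Rle_trans with (m * / 2); [apply Rmult_le_compat_l; lra| lra]. }
          replace ((/ 2) ^ S n * (LW * h)) with (m / 2) by (unfold m; simpl; field).
          lra. }
      exists h. split; [exact Hh0|]. intros u Hu HuT.
      apply Rnot_lt_le. intros Hpos.
      destruct (pow_lt_1_zero (/ 2) ltac:(rewrite Rabs_right; lra) (W u / (LW * h + 1))) as [n0 Hn0].
      { apply Rdiv_lt_0_compat; [lra|]. assert (0 <= LW * h) by (apply Rmult_le_pos; lra). lra. }
      specialize (Hn0 n0 (le_n n0)). rewrite Rabs_right in Hn0 by (apply Rle_ge, pow_le; lra).
      assert (C0 := Claim n0 u ltac:(lra)).
      assert (HLh : 0 <= LW * h) by (apply Rmult_le_pos; lra).
      assert ((/ 2) ^ n0 * (LW * h + 1) < W u).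
      { apply Rmult_lt_compat_r with (r := LW * h + 1) in Hn0; [|lra].
        replace (W u / (LW * h + 1) * (LW * h + 1)) with (W u) in Hn0 by (field; lra). exact Hn0. }
      assert (0 <= (/ 2) ^ n0) by (apply pow_le; lra).
      nra. }
  assert (HDT := HDp T HIT).
  assert (A1 := Rmax_r 0 (G1 T)). assert (A2 := Rmax_r 0 (G2 T)). assert (A3 := Rmax_r 0 (G3 T)).
  assert (B1 := Rmax_l 0 (G1 T)). assert (B2 := Rmax_l 0 (G2 T)). assert (B3 := Rmax_l 0 (G3 T)).
  unfold W in HWT.
  unfold Mset, T1, T2, T3. unfold G1, G2, G3, g1f, g2f, g3f in *. unfold a in *.
  split; [split; [exact HDT|lra]|split; split; [exact HDT|lra|exact HDT|lra]].
Qed.
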